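(* Let $L\ge1$ and let $\tilde\eta_L:\mathbb{R}^2\to[0,1]$ be a smooth function depending only on $x_2$, with all derivatives bounded, and supported in $\{x\in E:\ x_2>\sqrt L/4\}$ (extended by zero to $x_2<0$). Then for every $\psi\in D(H_b)$, the function $\tilde\eta_L\psi$ (restricted to $E$) lies in $D(H_b^E)$ and $$H_b^E\,\tilde\eta_L\psi=H_b\,\tilde\eta_L\psi.$$
   Context: $E=\mathbb{R}\times[0,\infty)$; $\sigma=(\sigma_1,\sigma_2)$ with Pauli matrices $\sigma_1=\begin{pmatrix}0&1\\1&0\end{pmatrix}$, $\sigma_2=\begin{pmatrix}0&-\mathrm{i}\\ \mathrm{i}&0\end{pmatrix}$; $\tilde A(x)=(-x_2,0)$; $b\ge0$. $H_b$ is the self-adjoint closure of $(-\mathrm{i}\nabla-b\tilde A)\cdot\sigma$ on $C_0^\infty(\mathbb{R}^2,\mathbb{C}^2)$ in $L^2(\mathbb{R}^2,\mathbb{C}^2)$. With $\mathscr S_+$ the restrictions to $E$ of Schwartz functions on $\mathbb{R}^2$ and $\mathscr M=\{\psi=(\psi_1,\psi_2)\in\mathscr S_+\oplus\mathscr S_+:\ \psi_1(x_1,0)=\psi_2(x_1,0)\ \forall x_1,\ \forall\alpha\ \exists c,C>0:\ |\partial^\alpha\psi(x)|\le C\mathrm{e}^{-c|x|}\}$, $H_b^E$ is the closure of $(-\mathrm{i}\nabla-b\tilde A)\cdot\sigma$ on $\mathscr M$ in $L^2(E,\mathbb{C}^2)$. *)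

(* Defs.v *)
From mathcomp Require Import all_boot all_order all_algebra.
From mathcomp Require Import all_classical all_reals all_analysis.
From mathcomp Require Import complex.
Import Order.TTheory GRing.Theory Num.Theory.
Import numFieldNormedType.Exports.

Set Implicit Arguments.
Unset Strict Implicit.
Unset Printing Implicit Defensive.

Local Open Scope classical_set_scope.
Local Open Scope ring_scope.
Local Open Scope complex_scope.

Section Dirac.
Variable R : realType.

Definition pt := (R * R)%type.

Definition spinor := pt -> 'cV[R[i]]_2.

Definition dir (j : 'I_2) : pt := if j == ord0 then (1, 0) else (0, 1).

Definition pnorm (x : pt) : R := Num.sqrt (x.1 ^+ 2 + x.2 ^+ 2).

Definition cabs2 (z : R[i]) : R := complex.Re z ^+ 2 + complex.Im z ^+ 2.
Definition snorm2 (v : 'cV[R[i]]_2) : R := \sum_(k < 2) cabs2 (v k ord0).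
Definition snorm (v : 'cV[R[i]]_2) : R := Num.sqrt (snorm2 v).

Definition rpartial (j : 'I_2) (f : pt -> R) : pt -> R :=
  fun x => 'D_(dir j) f x.

(** iterated partial derivative d^alpha, alpha given as a list of directions *)
Fixpoint riter (l : seq 'I_2) (f : pt -> R) : pt -> R :=
  if l is j :: l' then rpartial j (riter l' f) else f.

Definition rsmooth (f : pt -> R) : Prop :=
  forall l : seq 'I_2,
    continuous (riter l f) /\ forall (j : 'I_2) (x : pt), derivable (riter l f) x (dir j).

Definition cpartial (j : 'I_2) (g : pt -> R[i]) : pt -> R[i] :=
  fun x => (rpartial j (fun y => complex.Re (g y)) x)
           +i* (rpartial j (fun y => complex.Im (g y)) x).

Definition spartial (j : 'I_2) (psi : spinor) : spinor :=
  fun x => \col_(k < 2) cpartial j (fun y => psi y k ord0) x.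

Fixpoint siter (l : seq 'I_2) (psi : spinor) : spinor :=
  if l is j :: l' then spartial j (siter l' psi) else psi.

Definition re_comp (psi : spinor) (k : 'I_2) : pt -> R :=
  fun y => complex.Re (psi y k ord0).
Definition im_comp (psi : spinor) (k : 'I_2) : pt -> R :=
  fun y => complex.Im (psi y k ord0).

Definition ssmooth (psi : spinor) : Prop :=
  forall k : 'I_2, rsmooth (re_comp psi k) /\ rsmooth (im_comp psi k).

Definition C0inf (psi : spinor) : Prop :=
  ssmooth psi /\ exists M : R, forall x, M < pnorm x -> psi x = 0.

Definition schwartz (psi : spinor) : Prop :=
  ssmooth psi /\
  forall (l : seq 'I_2) (N : nat), exists C : R,
    forall x, (1 + pnorm x) ^+ N * snorm (siter l psi x) <= C.

Definition Eset : set pt := [set x | 0 <= x.2].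

(** The core M of H_b^E: an element of M is the restriction to E of a pair of
    Schwartz functions S; we quantify over the extension S, whose derivatives
    on E are the (one-sided at the boundary) derivatives of psi = S|_E. *)
Definition coreM (S : spinor) : Prop :=
  schwartz S /\
  (forall x1 : R, S (x1, 0) ord0 ord0 = S (x1, 0) (lift ord0 ord0) ord0) /\
  forall l : seq 'I_2, exists c C : R, 0 < c /\ 0 < C /\
    forall x, Eset x -> snorm (siter l S x) <= C * expR (- c * pnorm x).

Definition imC : R[i] := Complex 0 1.

Definition pauli1 : 'M[R[i]]_2 :=
  \matrix_(i < 2, j < 2) (if i == j then 0 else 1).
Definition pauli2 : 'M[R[i]]_2 :=
  \matrix_(i < 2, j < 2)
     (if i == j then 0 else if i == ord0 then - imC else imC).
Definition pauli (j : 'I_2) : 'M[R[i]]_2 := if j == ord0 then pauli1 else pauli2.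

Definition Atilde (x : pt) : pt := (- x.2, 0).
Definition Acomp (j : 'I_2) (x : pt) : R :=
  if j == ord0 then (Atilde x).1 else (Atilde x).2.

Definition dirac (b : R) (psi : spinor) : spinor :=
  fun x => \sum_(j < 2)
    pauli j *m ((- imC) *: spartial j psi x - (b * Acomp j x)%:C *: psi x).

Definition leb2 := ((@lebesgue_measure R) \x (@lebesgue_measure R))%E.

Definition L2on (D : set pt) (psi : spinor) : Prop :=
  (forall k : 'I_2, measurable_fun D (re_comp psi k) /\ measurable_fun D (im_comp psi k)) /\
  (\int[leb2]_(x in D) (snorm2 (psi x))%:E < +oo)%E.

Definition dist2 (D : set pt) (psi phi : spinor) : \bar R :=
  (\int[leb2]_(x in D) (snorm2 (psi x - phi x))%:E)%E.

(** graph of the closure in L^2(D, C^2) of the operator A defined on core: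
    (psi, phi) is in the graph iff psi, phi in L^2(D) and there is a sequence
    u_n in the core with u_n -> psi and A u_n -> phi in L^2(D). *)
Definition closure_graph (D : set pt) (core : spinor -> Prop)
    (A : spinor -> spinor) (psi phi : spinor) : Prop :=
  L2on D psi /\ L2on D phi /\
  exists u : nat -> spinor, (forall n, core (u n)) /\
    (dist2 D (u n) psi @[n --> \oo] --> 0%E) /\
    (dist2 D (A (u n)) phi @[n --> \oo] --> 0%E).

Definition Hb_graph (b : R) (psi phi : spinor) : Prop :=
  closure_graph setT C0inf (dirac b) psi phi.

(** H_b^E psi = phi (psi in D(H_b^E)), in L^2(E, C^2); only the values of
    psi, phi on E matter *)
Definition HbE_graph (b : R) (psi phi : spinor) : Prop :=
  closure_graph Eset coreM (dirac b) psi phi.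

Definition smul (eta : pt -> R) (psi : spinor) : spinor :=
  fun x => (eta x)%:C *: psi x.

End Dirac.

(* Main.v *)
Require Import Defs.
From mathcomp Require Import all_boot all_order all_algebra.
From mathcomp Require Import all_classical all_reals all_analysis.
From mathcomp Require Import complex.
From mathcomp Require Import lra ring.
From mathcomp Require Import measurable_realfun.
Set Implicit Arguments.
Unset Strict Implicit.
Unset Printing Implicit Defensive.
Import Order.TTheory GRing.Theory Num.Theory.
Import numFieldNormedType.Exports.
Local Open Scope classical_set_scope.
Local Open Scope ring_scope.
Section MeasA.
Variable R : realType.
Local Notation P := (pt R).

Lemma ballP2 (x y : P) (e : R) : ball x e y <-> (`|x.1 - y.1| < e /\ `|x.2 - y.2| < e).
Proof.
split.
- by case=> /= h1 h2; rewrite /ball/= in h1 h2; split.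
- by case=> h1 h2; split => /=; rewrite /ball/=.
Qed.

Definition box (t : rat * rat * rat) : set P :=
  `](ratr t.1.1 - ratr t.2 : R), ratr t.1.1 + ratr t.2[%classic `*`
  `](ratr t.1.2 - ratr t.2 : R), ratr t.1.2 + ratr t.2[%classic.

Lemma open_meas2 (U : set P) : open U -> measurable U.
Proof.
move=> oU.
have -> : U = \bigcup_(t : rat * rat * rat)
   (if `[< box t `<=` U >] then box t else set0).
  apply/seteqP; split; last first.
    by move=> x [t _]; case: asboolP => // /[apply].
  move=> x Ux.
  have := oU x Ux; rewrite /= => /nbhs_ballP [e e0 sub].
  have [p] : exists p : rat, (ratr p : R) \in `]0, e / 2[.
    by apply: rat_in_itvoo; rewrite divr_gt0.
  rewrite in_itv /= => /andP[p0 pe].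
  have [q1] : exists q : rat, (ratr q : R) \in `]x.1 - ratr p, x.1 + ratr p[.
    by apply: rat_in_itvoo; lra.
  rewrite in_itv /= => /andP[q1a q1b].
  have [q2] : exists q : rat, (ratr q : R) \in `]x.2 - ratr p, x.2 + ratr p[.
    by apply: rat_in_itvoo; lra.
  rewrite in_itv /= => /andP[q2a q2b].
  have bx : box (q1, q2, p) x.
    by split; rewrite /= in_itv /=; apply/andP; split; lra.
  exists (q1, q2, p) => //.
  have -> : `[< box (q1, q2, p) `<=` U >] = true.
    apply/asboolP => y [] /=; rewrite !in_itv /= => /andP[a1 b1] /andP[a2 b2].
    apply: sub; apply/ballP2; split; rewrite ltr_norml; apply/andP; split; lra.
  by [].
apply: countable_bigcupT_measurable.
  exact: countableP.
move=> t; case: ifP => // _.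
by apply: measurableX; exact: measurable_itv.
Qed.

Lemma cont_meas (f : P -> R) : continuous f -> measurable_fun setT f.
Proof.
move=> /continuousP cf; apply: (measurability _ (measurable_realfun.RGenOpens.measurableE R)).
move=> _ [_ [a [b ->] <-]]; rewrite setTI; apply: open_meas2.
exact/cf/interval_open.
Qed.

End MeasA.
Section DerB.
Variable R : realType.
Local Notation P := (pt R).

Definition lsum (s : seq (seq 'I_2 * seq 'I_2)) (f g : P -> R) : P -> R :=
  fun x => \sum_(p <- s) riter p.1 f x * riter p.2 g x.

Definition dstep (j : 'I_2) (s : seq (seq 'I_2 * seq 'I_2)) :=
  flatten [seq [:: (j :: p.1, p.2); (p.1, j :: p.2)] | p <- s].

Lemma lsum_cons p s f g :
  lsum (p :: s) f g = (fun x => riter p.1 f x * riter p.2 g x) + lsum s f g.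
Proof. by apply/funext => x; rewrite /lsum big_cons. Qed.

Lemma lsum_nil f g : lsum [::] f g = cst 0.
Proof. by apply/funext => x; rewrite /lsum big_nil. Qed.

Lemma lsum_derivable s f g (x : P) j :
  rsmooth f -> rsmooth g -> derivable (lsum s f g) x (dir R j).
Proof.
move=> sf sg; elim: s => [|p s IH]; first by rewrite lsum_nil; exact: derivable_cst.
rewrite lsum_cons; apply: derivableD => //.
by apply: derivableM; [exact: (sf p.1).2|exact: (sg p.2).2].
Qed.

Lemma lsum_cont s f g : rsmooth f -> rsmooth g -> continuous (lsum s f g).
Proof.
move=> sf sg; elim: s => [|p s IH]; first by rewrite lsum_nil; exact: cst_continuous.
rewrite lsum_cons => x; apply: continuousD; last exact: IH.
by apply: continuousM; [exact: (sf p.1).1|exact: (sg p.2).1].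
Qed.

Lemma lsum_partial s f g j :
  rsmooth f -> rsmooth g -> rpartial j (lsum s f g) = lsum (dstep j s) f g.
Proof.
move=> sf sg; elim: s => [|p s IH].
  by rewrite /dstep /= lsum_nil; apply/funext => x; rewrite /rpartial derive_cst.
rewrite /dstep /= -/(dstep j s) !lsum_cons -IH; apply/funext => x.
rewrite /rpartial deriveD; last 2 first.
- by apply: derivableM; [exact: (sf p.1).2|exact: (sg p.2).2].
- exact: lsum_derivable.
rewrite deriveM; [|exact: (sf p.1).2|exact: (sg p.2).2].
rewrite /GRing.scale /= !fctE /rpartial; lra.
Qed.

Lemma riter_mul_lsum l (f g : P -> R) : rsmooth f -> rsmooth g ->
  exists s, riter l (fun x => f x * g x) = lsum s f g.
Proof.
move=> sf sg; elim: l => [|j l [s IH]].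
  by exists [:: ([::], [::])]; apply/funext => x; rewrite /lsum big_seq1.
by exists (dstep j s); rewrite /= IH lsum_partial.
Qed.

Lemma rsmoothM (f g : P -> R) : rsmooth f -> rsmooth g -> rsmooth (fun x => f x * g x).
Proof.
move=> sf sg l; have [s ->] := @riter_mul_lsum l f g sf sg; split.
- exact: lsum_cont.
- by move=> j x; exact: lsum_derivable.
Qed.

Definition outbox (M : R) : set P := [set x | M < `|x.1| \/ M < `|x.2|].

Lemma open_outbox M : open (outbox M).
Proof.
have -> : outbox M = [set x : P | M < `|x.1|] `|` [set x : P | M < `|x.2|] by [].
apply: openU.
- have -> : [set x : P | M < `|x.1|] = (fun x : P => `|x.1|) @^-1` `]M, +oo[.
    by apply/seteqP; split => x /=; rewrite in_itv /= andbT.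
  apply: open_comp; last exact: interval_open.
  move=> x _; apply: continuous_comp; [exact: cvg_fst|exact: norm_continuous].
- have -> : [set x : P | M < `|x.2|] = (fun x : P => `|x.2|) @^-1` `]M, +oo[.
    by apply/seteqP; split => x /=; rewrite in_itv /= andbT.
  apply: open_comp; last exact: interval_open.
  move=> x _; apply: continuous_comp; [exact: cvg_snd|exact: norm_continuous].
Qed.

Lemma riter_vanish (M : R) (h : P -> R) l :
  (forall x, outbox M x -> h x = 0) -> forall x, outbox M x -> riter l h x = 0.
Proof.
move=> h0; elim: l => [|j l IH] x ox //=; first exact: h0.
rewrite /rpartial (@near_eq_derive _ _ _ _ (cst 0)) ?derive_cst //.
have : nbhs x (outbox M) by apply: open_nbhs_nbhs; split => //; exact: open_outbox.
by apply: filterS => y oy; rewrite IH.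
Qed.

End DerB.
Section AlgC.
Variable R : realType.
Local Notation P := (pt R).
Local Open Scope complex_scope.

Lemma snorm2E (v : 'cV[R[i]]_2) : snorm2 v =
  cabs2 (v ord0 ord0) + cabs2 (v (lift ord0 ord0) ord0).
Proof. by rewrite /snorm2 !big_ord_recl big_ord0 addr0. Qed.

Lemma cabs2_ge0 (z : R[i]) : 0 <= cabs2 z.
Proof. by rewrite /cabs2 addr_ge0 // sqr_ge0. Qed.

Lemma snorm2_ge0 (v : 'cV[R[i]]_2) : 0 <= snorm2 v.
Proof. rewrite snorm2E; apply: addr_ge0; apply: cabs2_ge0. Qed.

Lemma cabs2D (a b : R[i]) : cabs2 (a + b) <= 2 * cabs2 a + 2 * cabs2 b.
Proof.
case: a => a1 a2; case: b => b1 b2; rewrite /cabs2 /=.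
have h1 : 0 <= (a1 - b1) ^+ 2 by exact: sqr_ge0.
have h2 : 0 <= (a2 - b2) ^+ 2 by exact: sqr_ge0.
move: h1 h2; rewrite !expr2; nra.
Qed.

Lemma snorm2D (a b : 'cV[R[i]]_2) : snorm2 (a + b) <= 2 * snorm2 a + 2 * snorm2 b.
Proof.
rewrite !snorm2E !mxE.
have := cabs2D (a ord0 ord0) (b ord0 ord0).
have := cabs2D (a (lift ord0 ord0) ord0) (b (lift ord0 ord0) ord0).
lra.
Qed.

Lemma cabs2M (a b : R[i]) : cabs2 (a * b) = cabs2 a * cabs2 b.
Proof. case: a => a1 a2; case: b => b1 b2; rewrite /cabs2 /=; ring. Qed.

Lemma snorm2Z (z : R[i]) (a : 'cV[R[i]]_2) : snorm2 (z *: a) = cabs2 z * snorm2 a.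
Proof. rewrite !snorm2E !mxE !cabs2M; ring. Qed.

Lemma cabs2_real (c : R) : cabs2 c%:C = c ^+ 2.
Proof. rewrite /cabs2 /=; ring. Qed.

Lemma cabs2_iR (c : R) : cabs2 ((- imC R) * c%:C) = c ^+ 2.
Proof. by rewrite /cabs2 /imC /=; ring. Qed.

Lemma snorm2_pauli j (a : 'cV[R[i]]_2) : snorm2 (pauli R j *m a) = snorm2 a.
Proof.
rewrite !snorm2E !mxE !big_ord_recl !big_ord0 /= !addr0 /pauli.
case: ifP => _; rewrite /pauli1 /pauli2 !mxE /=.
- case: (a ord0 ord0) => ? ?; case: (a (lift ord0 ord0) ord0) => ? ?.
  rewrite /cabs2 /=; ring.
- case: (a ord0 ord0) => ? ?; case: (a (lift ord0 ord0) ord0) => ? ?.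
  rewrite /cabs2 /imC /=; ring.
Qed.

End AlgC.
Section SpinD.
Variable R : realType.
Local Notation P := (pt R).
Local Open Scope complex_scope.

Lemma re_smul (eta : P -> R) (u : spinor R) k :
  re_comp (smul eta u) k = fun y => eta y * re_comp u k y.
Proof.
apply/funext => y; rewrite /re_comp /smul mxE.
by case: (u y k ord0) => ? ? /=; ring.
Qed.

Lemma im_smul (eta : P -> R) (u : spinor R) k :
  im_comp (smul eta u) k = fun y => eta y * im_comp u k y.
Proof.
apply/funext => y; rewrite /im_comp /smul mxE.
by case: (u y k ord0) => ? ? /=; ring.
Qed.

Lemma re_spartial j (u : spinor R) k :
  re_comp (spartial j u) k = rpartial j (re_comp u k).
Proof. by apply/funext => y; rewrite /re_comp /spartial mxE. Qed.

Lemma im_spartial j (u : spinor R) k :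
  im_comp (spartial j u) k = rpartial j (im_comp u k).
Proof. by apply/funext => y; rewrite /im_comp /spartial mxE. Qed.

Lemma re_siter l (u : spinor R) k :
  re_comp (siter l u) k = riter l (re_comp u k).
Proof. by elim: l => [|j l IH] //=; rewrite re_spartial IH. Qed.

Lemma im_siter l (u : spinor R) k :
  im_comp (siter l u) k = riter l (im_comp u k).
Proof. by elim: l => [|j l IH] //=; rewrite im_spartial IH. Qed.

Lemma ssmooth_smul (eta : P -> R) (u : spinor R) :
  rsmooth eta -> ssmooth u -> ssmooth (smul eta u).
Proof.
move=> se su k; rewrite re_smul im_smul; split; apply: rsmoothM => //.
- exact: (su k).1.
- exact: (su k).2.
Qed.

Lemma entryE (v : 'cV[R[i]]_2) k :
  v k ord0 = (complex.Re (v k ord0)) +i* (complex.Im (v k ord0)).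
Proof. by case: (v k ord0). Qed.

Lemma spartial_smul j (eta : P -> R) (u : spinor R) (x : P) :
  rsmooth eta -> ssmooth u ->
  spartial j (smul eta u) x =
  (rpartial j eta x)%:C *: u x + (eta x)%:C *: spartial j u x.
Proof.
move=> se su; apply/matrixP => k c; rewrite (ord1 c) !mxE.
rewrite /cpartial.
have -> : (fun y => complex.Re (smul eta u y k ord0)) = re_comp (smul eta u) k by [].
have -> : (fun y => complex.Im (smul eta u y k ord0)) = im_comp (smul eta u) k by [].
rewrite re_smul im_smul.
have -> : (fun y => complex.Re (u y k ord0)) = re_comp u k by [].
have -> : (fun y => complex.Im (u y k ord0)) = im_comp u k by [].
rewrite /rpartial.
rewrite (@deriveM _ _ eta (re_comp u k)); last 2 first.
- exact: ((se [::]).2 j x).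
- exact: (((su k).1 [::]).2 j x).
rewrite (@deriveM _ _ eta (im_comp u k)); last 2 first.
- exact: ((se [::]).2 j x).
- exact: (((su k).2 [::]).2 j x).
rewrite [u x k ord0]entryE /re_comp /im_comp /GRing.scale /=.
apply/eqP; rewrite eq_complex /=; apply/andP; split; apply/eqP; ring.
Qed.

End SpinD.
Section DiracE.
Variable R : realType.
Local Notation P := (pt R).
Local Open Scope complex_scope.

Definition cterm (eta : P -> R) (j : 'I_2) (x : P) : R[i] :=
  (- imC R) * (rpartial j eta x)%:C.

Lemma gen_dirac (T : comNzRingType) (Pm : 'I_2 -> 'M[T]_2) (m eT : T) (d a : 'I_2 -> T)
   (U : 'cV[T]_2) (dU : 'I_2 -> 'cV[T]_2) :
 \sum_(j < 2) Pm j *m (m *: (d j *: U + eT *: dU j) - a j *: (eT *: U)) =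
 eT *: \sum_(j < 2) Pm j *m (m *: dU j - a j *: U) + \sum_(j < 2) (m * d j) *: (Pm j *m U).
Proof.
apply/matrixP => k c.
rewrite !(mxE, summxE, big_ord_recl, big_ord0).
ring.
Qed.

Lemma dirac_smul b (eta : P -> R) (u : spinor R) (x : P) :
  rsmooth eta -> ssmooth u ->
  Defs.dirac b (smul eta u) x = (eta x)%:C *: Defs.dirac b u x +
    \sum_(j < 2) cterm eta j x *: (pauli R j *m u x).
Proof.
move=> se su; rewrite /Defs.dirac.
under eq_bigr => j _ do rewrite spartial_smul //.
rewrite /smul /cterm; exact: (@gen_dirac _ (pauli R) (- imC R) (eta x)%:C (fun j => (rpartial j eta x)%:C)
   (fun j => (b * Acomp j x)%:C) (u x) (fun j => spartial j u x)).
Qed.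

Lemma gen_diff (T : comNzRingType) (Pm : 'I_2 -> 'M[T]_2) (e : T) (c : 'I_2 -> T)
   (D ph ps U : 'cV[T]_2) :
 (e *: D + \sum_(j < 2) c j *: (Pm j *m U)) - (e *: ph + (c ord0 *: (Pm ord0 *m ps) +
   c (lift ord0 ord0) *: (Pm (lift ord0 ord0) *m ps))) =
 e *: (D - ph) + (c ord0 *: (Pm ord0 *m (U - ps)) +
                  c (lift ord0 ord0) *: (Pm (lift ord0 ord0) *m (U - ps))).
Proof.
apply/matrixP => k l.
rewrite !(mxE, summxE, big_ord_recl, big_ord0).
ring.
Qed.

Lemma dirac_diff b (eta : P -> R) (u psi phi : spinor R) (x : P) :
  rsmooth eta -> ssmooth u ->
  Defs.dirac b (smul eta u) x -
  ((eta x)%:C *: phi x + (cterm eta ord0 x *: (pauli R ord0 *m psi x) +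
     cterm eta (lift ord0 ord0) x *: (pauli R (lift ord0 ord0) *m psi x))) =
  (eta x)%:C *: (Defs.dirac b u x - phi x) +
    (cterm eta ord0 x *: (pauli R ord0 *m (u x - psi x)) +
     cterm eta (lift ord0 ord0) x *: (pauli R (lift ord0 ord0) *m (u x - psi x))).
Proof.
move=> se su; rewrite dirac_smul //.
exact: (@gen_diff _ (pauli R) (eta x)%:C (fun j => cterm eta j x)).
Qed.

End DiracE.
Section MeasF.
Variable R : realType.
Local Notation P := (pt R).
Local Open Scope complex_scope.

Definition smeas (v : spinor R) := forall k : 'I_2,
  measurable_fun setT (re_comp v k) /\ measurable_fun setT (im_comp v k).

Definition cmeas (z : P -> R[i]) :=
  measurable_fun setT (fun x => complex.Re (z x)) /\
  measurable_fun setT (fun x => complex.Im (z x)).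

Lemma cmeasD z w : cmeas z -> cmeas w -> cmeas (fun x => z x + w x).
Proof.
move=> [z1 z2] [w1 w2]; split.
- have -> : (fun x => complex.Re (z x + w x)) =
     (fun x => complex.Re (z x)) \+ (fun x => complex.Re (w x)).
    by apply/funext => x /=; case: (z x); case: (w x).
  exact: measurable_funD.
- have -> : (fun x => complex.Im (z x + w x)) =
     (fun x => complex.Im (z x)) \+ (fun x => complex.Im (w x)).
    by apply/funext => x /=; case: (z x); case: (w x).
  exact: measurable_funD.
Qed.

Lemma cmeasN z : cmeas z -> cmeas (fun x => - z x).
Proof.
move=> [z1 z2]; split.
- have -> : (fun x => complex.Re (- z x)) = \- (fun x => complex.Re (z x)).
    by apply/funext => x /=; case: (z x).
  exact: measurable_funN.
- have -> : (fun x => complex.Im (- z x)) = \- (fun x => complex.Im (z x)).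
    by apply/funext => x /=; case: (z x).
  exact: measurable_funN.
Qed.

Lemma cmeasM z w : cmeas z -> cmeas w -> cmeas (fun x => z x * w x).
Proof.
move=> [z1 z2] [w1 w2]; split.
- have -> : (fun x => complex.Re (z x * w x)) =
     ((fun x => complex.Re (z x)) \* (fun x => complex.Re (w x))) \-
     ((fun x => complex.Im (z x)) \* (fun x => complex.Im (w x))).
    by apply/funext => x /=; case: (z x); case: (w x).
  by apply: measurable_funB; apply: measurable_funM.
- have -> : (fun x => complex.Im (z x * w x)) =
     ((fun x => complex.Re (z x)) \* (fun x => complex.Im (w x))) \+
     ((fun x => complex.Im (z x)) \* (fun x => complex.Re (w x))).
    by apply/funext => x /=; case: (z x); case: (w x).
  by apply: measurable_funD; apply: measurable_funM.
Qed.

Lemma cmeas_cst c : cmeas (fun _ => c).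
Proof. by split; exact: measurable_cst. Qed.

Lemma cmeas_real (f : P -> R) : measurable_fun setT f -> cmeas (fun x => (f x)%:C).
Proof. by move=> mf; split => //=; exact: measurable_cst. Qed.

Lemma smeasE v : smeas v <-> forall k, cmeas (fun x => v x k ord0).
Proof. by split => h k; have [] := h k. Qed.

Lemma smeasD v w : smeas v -> smeas w -> smeas (fun x => v x + w x).
Proof.
move=> /smeasE hv /smeasE hw; apply/smeasE => k.
have -> : (fun x => (v x + w x) k ord0) = fun x => v x k ord0 + w x k ord0.
  by apply/funext => x; rewrite mxE.
exact: cmeasD.
Qed.

Lemma smeasN v : smeas v -> smeas (fun x => - v x).
Proof.
move=> /smeasE hv; apply/smeasE => k.
have -> : (fun x => (- v x) k ord0) = fun x => - v x k ord0.
  by apply/funext => x; rewrite mxE.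
exact: cmeasN.
Qed.

Lemma smeasB v w : smeas v -> smeas w -> smeas (fun x => v x - w x).
Proof. by move=> hv hw; apply: smeasD => //; exact: smeasN. Qed.

Lemma smeasZ z v : cmeas z -> smeas v -> smeas (fun x => z x *: v x).
Proof.
move=> hz /smeasE hv; apply/smeasE => k.
have -> : (fun x => (z x *: v x) k ord0) = fun x => z x * v x k ord0.
  by apply/funext => x; rewrite mxE.
exact: cmeasM.
Qed.

Lemma smeasMx (M : 'M[R[i]]_2) v : smeas v -> smeas (fun x => M *m v x).
Proof.
move=> /smeasE hv; apply/smeasE => k.
have -> : (fun x => (M *m v x) k ord0) =
   fun x => M k ord0 * v x ord0 ord0 + (M k (lift ord0 ord0) * v x (lift ord0 ord0) ord0 + 0).
  by apply/funext => x; rewrite mxE !big_ord_recl big_ord0.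
apply: cmeasD; first by apply: cmeasM => //; exact: cmeas_cst.
apply: cmeasD; last exact: cmeas_cst.
by apply: cmeasM => //; exact: cmeas_cst.
Qed.

Lemma smeas_sum2 (F : 'I_2 -> spinor R) : (forall j, smeas (F j)) ->
  smeas (fun x => \sum_(j < 2) F j x).
Proof.
move=> hF.
have -> : (fun x => \sum_(j < 2) F j x) =
   fun x => F ord0 x + (F (lift ord0 ord0) x + 0).
  by apply/funext => x; rewrite !big_ord_recl big_ord0.
apply: smeasD => //; apply: smeasD => //.
by move=> k; split; rewrite /re_comp /im_comp mxE; exact: measurable_cst.
Qed.

Lemma snorm2_meas v : smeas v -> measurable_fun setT (fun x => snorm2 (v x)).
Proof.
move=> hv.
have -> : (fun x => snorm2 (v x)) =
  ((re_comp v ord0 \* re_comp v ord0) \+ (im_comp v ord0 \* im_comp v ord0)) \+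
  ((re_comp v (lift ord0 ord0) \* re_comp v (lift ord0 ord0)) \+
   (im_comp v (lift ord0 ord0) \* im_comp v (lift ord0 ord0))).
  by apply/funext => x; rewrite snorm2E /cabs2 /re_comp /im_comp /= !expr2.
have [h1 h2] := hv ord0; have [h3 h4] := hv (lift ord0 ord0).
by repeat apply: measurable_funD; apply: measurable_funM.
Qed.

Lemma smeas_smooth (u : spinor R) l : ssmooth u -> smeas (siter l u).
Proof.
move=> su k; rewrite re_siter im_siter; split; apply: cont_meas.
- exact: ((su k).1 l).1.
- exact: ((su k).2 l).1.
Qed.

Lemma smeas_smul (eta : P -> R) v : measurable_fun setT eta -> smeas v ->
  smeas (smul eta v).
Proof. by move=> me hv; apply: smeasZ => //; exact: cmeas_real. Qed.

Lemma smeas_dirac b (u : spinor R) : ssmooth u -> smeas (Defs.dirac b u).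
Proof.
move=> su; apply: smeas_sum2 => j; apply: smeasMx; apply: smeasB.
- apply: smeasZ; first exact: cmeas_cst.
  exact: (@smeas_smooth u [:: j] su).
- apply: smeasZ; last exact: (@smeas_smooth u [::] su).
  apply: cmeas_real; rewrite /Acomp; case: (j == ord0) => /=.
  + apply: measurable_funM; first exact: measurable_cst.
    by apply: measurable_funN; exact: measurable_snd.
  + by apply: measurable_funM; exact: measurable_cst.
Qed.

End MeasF.
Section IntG.
Variable R : realType.
Local Notation P := (pt R).
Local Open Scope ereal_scope.

Lemma int_le2 (D : set P) (mD : measurable D) (F G H : P -> R) (a c : R) :
  (0 <= a)%R -> (0 <= c)%R ->
  measurable_fun D F -> measurable_fun D G -> measurable_fun D H ->
  (forall x, 0 <= F x)%R -> (forall x, 0 <= G x)%R -> (forall x, 0 <= H x)%R ->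
  (forall x, D x -> F x <= a * G x + c * H x)%R ->
  \int[@leb2 R]_(x in D) (F x)%:E <=
    a%:E * \int[@leb2 R]_(x in D) (G x)%:E + c%:E * \int[@leb2 R]_(x in D) (H x)%:E.
Proof.
move=> a0 c0 mF mG mH F0 G0 H0 FGH.
have mG' : measurable_fun D (EFin \o G) by apply/measurable_EFinP.
have mH' : measurable_fun D (EFin \o H) by apply/measurable_EFinP.
rewrite -ge0_integralZl_EFin //; last by move=> x _; rewrite lee_fin.
rewrite -[X in _ <= _ + X]ge0_integralZl_EFin //; last by move=> x _; rewrite lee_fin.
rewrite -ge0_integralD //; first last.
- by apply: emeasurable_funM => //; exact: measurable_cst.
- by move=> x _; rewrite -EFinM lee_fin mulr_ge0.
- by apply: emeasurable_funM => //; exact: measurable_cst.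
- by move=> x _; rewrite -EFinM lee_fin mulr_ge0.
apply: ge0_le_integral => //.
all: try (by move=> x _; rewrite lee_fin).
all: try (by apply/measurable_EFinP).
all: try (by apply: emeasurable_funD; apply: emeasurable_funM => //; exact: measurable_cst).
all: try (by move=> x Dx; rewrite -!EFinM -EFinD lee_fin; exact: FGH).
Qed.

Lemma cvg_sq2 (A B C : nat -> \bar R) (a c : R) :
  (0 <= a)%R -> (0 <= c)%R -> (forall n, 0 <= A n) ->
  (forall n, A n <= a%:E * B n + c%:E * C n) ->
  B n @[n --> \oo] --> 0 -> C n @[n --> \oo] --> 0 -> A n @[n --> \oo] --> 0.
Proof.
move=> a0 c0 A0 ABC hB hC.
apply: (@squeeze_cvge _ _ _ _ (fun=> 0) _ (fun n => a%:E * B n + c%:E * C n)).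
- by near=> n; rewrite A0 ABC.
- exact: cvg_cst.
- have := cvgeD _ (cvgeZl (y := a%:E) _ hB) (cvgeZl (y := c%:E) _ hC).
  by rewrite !mule0 adde0; apply.
Unshelve. all: by end_near.
Qed.

End IntG.
Section BoundH.
Variable R : realType.
Local Notation P := (pt R).
Local Open Scope complex_scope.

Lemma sq_le (d K : R) : `|d| <= K -> d ^+ 2 <= K ^+ 2.
Proof.
move=> h; rewrite -real_normK ?num_real //.
have h0 : 0 <= `|d| by [].
by rewrite lerXn2r // ?nnegrE //; apply: le_trans h.
Qed.

Lemma shape_bound (e : R) (A w : 'cV[R[i]]_2) (d0 d1 K0 K1 : R) :
  e ^+ 2 <= 1 -> `|d0| <= K0 -> `|d1| <= K1 ->
  snorm2 (e%:C *: A + (((- imC R) * d0%:C) *: (pauli R ord0 *m w) +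
                       ((- imC R) * d1%:C) *: (pauli R (lift ord0 ord0) *m w)))
  <= 2 * snorm2 A + 4 * (K0 ^+ 2 + K1 ^+ 2) * snorm2 w.
Proof.
move=> he h0 h1.
apply: (le_trans (snorm2D _ _)).
have := snorm2D (((- imC R) * d0%:C) *: (pauli R ord0 *m w))
                (((- imC R) * d1%:C) *: (pauli R (lift ord0 ord0) *m w)).
rewrite !snorm2Z !cabs2_iR cabs2_real !snorm2_pauli => h2.
have k0 := sq_le h0; have k1 := sq_le h1.
have sA := snorm2_ge0 A; have sw := snorm2_ge0 w.
have d0s : 0 <= d0 ^+ 2 by exact: sqr_ge0.
have d1s : 0 <= d1 ^+ 2 by exact: sqr_ge0.
have p1 : e ^+ 2 * snorm2 A <= snorm2 A.
  by rewrite -[X in _ <= X]mul1r ler_wpM2r.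
have p2 : d0 ^+ 2 * snorm2 w <= K0 ^+ 2 * snorm2 w by rewrite ler_wpM2r.
have p3 : d1 ^+ 2 * snorm2 w <= K1 ^+ 2 * snorm2 w by rewrite ler_wpM2r.
lra.
Qed.

Lemma smul_bound (eta : P -> R) (v : spinor R) x :
  0 <= eta x <= 1 -> snorm2 (smul eta v x) <= snorm2 (v x).
Proof.
move=> /andP[a b]; rewrite /smul snorm2Z cabs2_real.
rewrite -[X in _ <= X]mul1r ler_wpM2r ?snorm2_ge0 //.
by rewrite expr_le1.
Qed.

Lemma smul_diff (eta : P -> R) (v w : spinor R) x :
  smul eta v x - smul eta w x = (eta x)%:C *: (v x - w x).
Proof. by rewrite /smul scalerBr. Qed.

Lemma pnorm_ge1 (x : P) : `|x.1| <= pnorm x.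
Proof.
rewrite /pnorm -sqrtr_sqr ler_sqrt ?addr_ge0 ?sqr_ge0 //.
by rewrite lerDl sqr_ge0.
Qed.

Lemma pnorm_ge2 (x : P) : `|x.2| <= pnorm x.
Proof.
rewrite /pnorm -sqrtr_sqr ler_sqrt ?addr_ge0 ?sqr_ge0 //.
by rewrite lerDr sqr_ge0.
Qed.

Lemma pnorm_le (x : P) : pnorm x <= `|x.1| + `|x.2|.
Proof.
have n1 : 0 <= `|x.1| by []. have n2 : 0 <= `|x.2| by [].
rewrite /pnorm -[X in _ <= X]ger0_norm ?addr_ge0 //.
rewrite -sqrtr_sqr ler_sqrt ?sqr_ge0 //.
have e1 : `|x.1| ^+ 2 = x.1 ^+ 2 by rewrite real_normK ?num_real.
have e2 : `|x.2| ^+ 2 = x.2 ^+ 2 by rewrite real_normK ?num_real.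
rewrite -e1 -e2; nra.
Qed.

Lemma box_bound (f : P -> R) (M : R) : continuous f ->
  exists B, 0 <= B /\ forall x : P, `|x.1| <= M -> `|x.2| <= M -> `|f x| <= B.
Proof.
move=> cf.
have cK : compact (`[- M, M]%classic `*` `[- M, M]%classic : set P).
  by apply: compact_setX; exact: segment_compact.
have := compact_bounded (continuous_compact (continuous_subspaceT cf) cK).
move=> [B [_ hB]].
exists (`|B| + 1); split; first by rewrite addr_ge0.
move=> x h1 h2.
have : [set y | `|y| <= `|B| + 1] (f x).
  apply: (hB (`|B| + 1)); first by apply: (le_lt_trans (ler_norm B)); rewrite ltrDl.
  exists x => //; split; rewrite /= in_itv /=; rewrite -ler_norml //.
by [].
Qed.

End BoundH.
Section SuppI.
Variable R : realType.
Local Notation P := (pt R).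
Local Open Scope complex_scope.

Lemma snorm2_siter l (v : spinor R) (x : P) : snorm2 (siter l v x) =
  (riter l (re_comp v ord0) x) ^+ 2 + (riter l (im_comp v ord0) x) ^+ 2 +
  ((riter l (re_comp v (lift ord0 ord0)) x) ^+ 2 +
   (riter l (im_comp v (lift ord0 ord0)) x) ^+ 2).
Proof.
by rewrite snorm2E /cabs2 -!re_siter -!im_siter /re_comp /im_comp.
Qed.

Lemma siter_zero l (v : spinor R) (x : P) :
  riter l (re_comp v ord0) x = 0 -> riter l (im_comp v ord0) x = 0 ->
  riter l (re_comp v (lift ord0 ord0)) x = 0 -> riter l (im_comp v (lift ord0 ord0)) x = 0 ->
  siter l v x = 0.
Proof.
rewrite -!re_siter -!im_siter /re_comp /im_comp => h1 h2 h3 h4.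
apply/matrixP => k c; rewrite (ord1 c) [LHS]entryE mxE.
case: (unliftP ord0 k) => [j ->|->].
- by rewrite (ord1 j) h3 h4.
- by rewrite h1 h2.
Qed.

Lemma snorm0 : snorm (0 : 'cV[R[i]]_2) = 0.
Proof. by rewrite /snorm snorm2E !mxE /cabs2 /= expr2 mul0r !addr0 sqrtr0. Qed.

Lemma csupp (v : spinor R) (M : R) : ssmooth v ->
  (forall x, M < pnorm x -> v x = 0) ->
  forall l, exists S, 0 <= S /\ forall x : P,
    snorm (siter l v x) <= S /\
    (~ (`|x.1| <= `|M| /\ `|x.2| <= `|M|) -> siter l v x = 0).
Proof.
move=> sv supp l.
have vo : forall x, outbox `|M| x -> v x = 0.
  move=> x [h|h]; apply: supp.
  - by apply: le_lt_trans (ler_norm M) _; apply: lt_le_trans h _; exact: pnorm_ge1.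
  - by apply: le_lt_trans (ler_norm M) _; apply: lt_le_trans h _; exact: pnorm_ge2.
have ro : forall k x, outbox `|M| x -> re_comp v k x = 0.
  by move=> k x /vo vx; rewrite /re_comp vx mxE.
have io : forall k x, outbox `|M| x -> im_comp v k x = 0.
  by move=> k x /vo vx; rewrite /im_comp vx mxE.
have zo : forall x, ~ (`|x.1| <= `|M| /\ `|x.2| <= `|M|) -> siter l v x = 0.
  move=> x nb.
  have ox : outbox `|M| x.
    case: (leP `|x.1| `|M|) => h1; last by left.
    case: (leP `|x.2| `|M|) => h2; last by right.
    by exfalso; apply: nb.
  by apply: siter_zero; apply: riter_vanish ox => y oy; [exact: ro|exact: io|exact: ro|exact: io].
have [B1 [B10 hB1]] := box_bound `|M| ((sv ord0).1 l).1.
have [B2 [B20 hB2]] := box_bound `|M| ((sv ord0).2 l).1.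
have [B3 [B30 hB3]] := box_bound `|M| ((sv (lift ord0 ord0)).1 l).1.
have [B4 [B40 hB4]] := box_bound `|M| ((sv (lift ord0 ord0)).2 l).1.
set T := B1 + B2 + B3 + B4.
have T0 : 0 <= T by rewrite /T !addr_ge0.
exists (2 * T); split; first by rewrite mulr_ge0.
move=> x; split; last exact: zo.
case: (boolP ((`|x.1| <= `|M|) && (`|x.2| <= `|M|))) => [/andP[h1 h2]|nb]; last first.
  rewrite zo ?snorm0 ?mulr_ge0 //.
  by case=> h1 h2; move/negP: nb; apply; rewrite h1 h2.
rewrite /snorm -[X in _ <= X]ger0_norm ?mulr_ge0 // -sqrtr_sqr ler_sqrt ?sqr_ge0 //.
rewrite snorm2_siter.
have := hB1 x h1 h2; have := hB2 x h1 h2; have := hB3 x h1 h2; have := hB4 x h1 h2.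
move: (riter l (re_comp v ord0) x) (riter l (im_comp v ord0) x)
  (riter l (re_comp v (lift ord0 ord0)) x) (riter l (im_comp v (lift ord0 ord0)) x).
move=> a1 a2 a3 a4 e4 e3 e2 e1.
have s1 := sq_le (le_trans e1 (_ : B1 <= T)).
have s2 := sq_le (le_trans e2 (_ : B2 <= T)).
have s3 := sq_le (le_trans e3 (_ : B3 <= T)).
have s4 := sq_le (le_trans e4 (_ : B4 <= T)).
have := s1 ltac:(rewrite /T; lra). have := s2 ltac:(rewrite /T; lra).
have := s3 ltac:(rewrite /T; lra). have := s4 ltac:(rewrite /T; lra).
have -> : (2 * T) ^+ 2 = 4 * T ^+ 2 by ring.
lra.
Qed.

End SuppI.
Section SuppJ.
Variable R : realType.
Local Notation P := (pt R).

Lemma lerXn_nn (a b : R) N : 0 <= a -> a <= b -> a ^+ N <= b ^+ N.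
Proof.
move=> a0 ab; elim: N => [|N IH]; first by rewrite !expr0.
rewrite !exprS; apply: ler_pM => //; exact: exprn_ge0.
Qed.

Lemma in_box_pnorm (x : P) (M : R) : `|x.1| <= `|M| -> `|x.2| <= `|M| -> pnorm x <= 2 * `|M|.
Proof. move=> h1 h2; apply: (le_trans (pnorm_le x)); lra. Qed.

Lemma pnorm_ge0 (x : P) : 0 <= pnorm x.
Proof. exact: sqrtr_ge0. Qed.

Lemma snorm_ge0 (w : 'cV[R[i]]_2) : 0 <= snorm w.
Proof. exact: sqrtr_ge0. Qed.

Lemma csupp_schwartz (v : spinor R) (M : R) : ssmooth v ->
  (forall x, M < pnorm x -> v x = 0) -> schwartz v.
Proof.
move=> sv supp; split => // l N.
have [S [S0 hS]] := csupp sv supp l.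
exists ((1 + 2 * `|M|) ^+ N * S) => x.
have [hx zx] := hS x.
case: (boolP ((`|x.1| <= `|M|) && (`|x.2| <= `|M|))) => [/andP[h1 h2]|nb].
- apply: ler_pM => //; first exact: exprn_ge0 (addr_ge0 ler01 (pnorm_ge0 x)).
  + exact: snorm_ge0.
  + apply: lerXn_nn; first exact: addr_ge0 ler01 (pnorm_ge0 x).
    by rewrite lerD2l; exact: in_box_pnorm.
- rewrite zx ?snorm0 ?mulr0; first by rewrite mulr_ge0 // exprn_ge0 // addr_ge0.
  by case=> h1 h2; move/negP: nb; apply; rewrite h1 h2.
Qed.

Lemma csupp_exp (v : spinor R) (M : R) : ssmooth v ->
  (forall x, M < pnorm x -> v x = 0) ->
  forall l : seq 'I_2, exists c C : R, 0 < c /\ 0 < C /\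
    forall x, Eset x -> snorm (siter l v x) <= C * expR (- c * pnorm x).
Proof.
move=> sv supp l.
have [S [S0 hS]] := csupp sv supp l.
exists 1, (S * expR (2 * `|M|) + 1); split => //; split.
  by rewrite ltr_wpDl // mulr_ge0 // expR_ge0.
move=> x _; have [hx zx] := hS x.
rewrite mulN1r.
case: (boolP ((`|x.1| <= `|M|) && (`|x.2| <= `|M|))) => [/andP[h1 h2]|nb].
- apply: (le_trans hx).
  have hp := in_box_pnorm h1 h2.
  have e1 : 1 <= expR (2 * `|M|) * expR (- pnorm x).
    rewrite -expRD; apply: le_trans (expR_ge1Dx _); lra.
  have ep : 0 <= expR (- pnorm x) by exact: expR_ge0.
  rewrite mulrDl mul1r -mulrA.
  have : S <= S * (expR (2 * `|M|) * expR (- pnorm x)) by rewrite ler_peMr.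
  lra.
- rewrite zx ?snorm0; first by rewrite mulr_ge0 // ?expR_ge0 // addr_ge0 // mulr_ge0 // expR_ge0.
  by case=> h1 h2; move/negP: nb; apply; rewrite h1 h2.
Qed.

End SuppJ.
Section MainK.
Variable R : realType.
Local Notation P := (pt R).
Local Open Scope complex_scope.

Definition chiF (eta : P -> R) (phi psi : spinor R) : spinor R := fun x =>
  (eta x)%:C *: phi x + (cterm eta ord0 x *: (pauli R ord0 *m psi x) +
     cterm eta (lift ord0 ord0) x *: (pauli R (lift ord0 ord0) *m psi x)).

Lemma smeas_chi (eta : P -> R) phi psi : rsmooth eta -> smeas phi -> smeas psi ->
  smeas (chiF eta phi psi).
Proof.
move=> se hphi hpsi.
have meta : measurable_fun setT eta := cont_meas ((se [::]).1).
apply: smeasD; first exact: smeas_smul.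
have ct j : cmeas (cterm eta j).
  apply: (cmeasM (z := fun _ => - imC R) (w := fun x => (rpartial j eta x)%:C)).
    exact: cmeas_cst.
  apply: (cmeas_real (f := rpartial j eta)).
  exact: (cont_meas ((se [:: j]).1)).
by apply: smeasD; apply: smeasZ => //; apply: smeasMx.
Qed.

Lemma fin_comb (X I J : \bar R) (a c : R) : 0 <= a -> 0 <= c ->
  (0 <= I)%E -> (0 <= J)%E -> (I < +oo)%E -> (J < +oo)%E ->
  (X <= a%:E * I + c%:E * J)%E -> (X < +oo)%E.
Proof.
move=> a0 c0 I0 J0 Ioo Joo XIJ; apply: (le_lt_trans XIJ).
have /fineK <- : I \is a fin_num by rewrite ge0_fin_numE.
have /fineK <- : J \is a fin_num by rewrite ge0_fin_numE.
by rewrite -!EFinM -EFinD ltry.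
Qed.

Lemma mEset : measurable (@Eset R).
Proof.
have -> : @Eset R = setT `*` `[0, +oo[%classic.
  apply/seteqP; split => x; rewrite /Eset /= in_itv /= andbT //.
  by case.
by apply: measurableX => //; exact: measurable_itv.
Qed.

Lemma L2on_E (w : spinor R) : L2on setT w -> L2on (@Eset R) w.
Proof.
move=> [mw iw]; split.
  move=> k; have [m1 m2] := mw k.
  by split; apply: measurable_funS m1 || apply: measurable_funS m2 => //.
apply: le_lt_trans iw.
apply: ge0_subset_integral => //; first exact: mEset.
- by apply/measurable_EFinP; apply: snorm2_meas.
- by move=> x _; rewrite lee_fin snorm2_ge0.
Qed.

Lemma dist2_E_le (v w : spinor R) : smeas v -> smeas w ->
  (dist2 (@Eset R) v w <= dist2 setT v w)%E.
Proof.
move=> hv hw; apply: ge0_subset_integral => //; first exact: mEset.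
- by apply/measurable_EFinP; apply: snorm2_meas; apply: smeasB.
- by move=> x _; rewrite lee_fin snorm2_ge0.
Qed.

Lemma dist2_ge0 D (v w : spinor R) : (0 <= dist2 D v w)%E.
Proof. by apply: integral_ge0 => x _; rewrite lee_fin snorm2_ge0. Qed.

Lemma cvg_E (U : nat -> spinor R) (w : spinor R) : (forall n, smeas (U n)) -> smeas w ->
  dist2 setT (U n) w @[n --> \oo] --> 0%E ->
  dist2 (@Eset R) (U n) w @[n --> \oo] --> 0%E.
Proof.
move=> hU hw c; apply: (cvg_sq2 (a := 1) (c := 0) _ _ _ _ c c) => //.
- by move=> n; exact: dist2_ge0.
- by move=> n; rewrite mul1e mul0e adde0; exact: dist2_E_le.
Qed.

Lemma dist2_comb (F : nat -> spinor R) (Fw : spinor R) (G : nat -> spinor R) (Gw : spinor R)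
   (H : nat -> spinor R) (Hw : spinor R) (a c : R) :
  0 <= a -> 0 <= c ->
  (forall n, smeas (F n)) -> smeas Fw -> (forall n, smeas (G n)) -> smeas Gw ->
  (forall n, smeas (H n)) -> smeas Hw ->
  (forall n x, snorm2 (F n x - Fw x) <= a * snorm2 (G n x - Gw x) + c * snorm2 (H n x - Hw x)) ->
  dist2 setT (G n) Gw @[n --> \oo] --> 0%E ->
  dist2 setT (H n) Hw @[n --> \oo] --> 0%E ->
  dist2 setT (F n) Fw @[n --> \oo] --> 0%E.
Proof.
move=> a0 c0 hF hFw hG hGw hH hHw bnd cG cH.
apply: (cvg_sq2 a0 c0 _ _ cG cH).
- by move=> n; exact: dist2_ge0.
- move=> n; apply: int_le2 => //.
  all: try (by apply: snorm2_meas; apply: smeasB).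
  all: try (by move=> x; exact: snorm2_ge0).
  all: try (by move=> x _; exact: bnd).
Qed.

Lemma L2_comb (w G H : spinor R) (a c : R) : 0 <= a -> 0 <= c ->
  smeas w -> L2on setT G -> L2on setT H ->
  (forall x, snorm2 (w x) <= a * snorm2 (G x) + c * snorm2 (H x)) -> L2on setT w.
Proof.
move=> a0 c0 hw [hG iG] [hH iH] bnd; split => //.
apply: (fin_comb a0 c0 _ _ iG iH).
- by apply: integral_ge0 => x _; rewrite lee_fin snorm2_ge0.
- by apply: integral_ge0 => x _; rewrite lee_fin snorm2_ge0.
apply: int_le2 => //.
all: try (by apply: snorm2_meas).
all: try (by move=> x; exact: snorm2_ge0).
all: try (by move=> x _; exact: bnd).
Qed.

Lemma eta_bdry (eta : P -> R) (L : R) :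
  closure [set x | eta x != 0] `<=` [set x | 0 <= x.2 /\ Num.sqrt L / 4 < x.2] ->
  forall x1, eta (x1, 0) = 0.
Proof.
move=> hs x1; case: (eqVneq (eta (x1, 0)) 0) => // ne.
have := hs (x1, 0) (@subset_closure _ [set x | eta x != 0] (x1, 0) ne).
rewrite /= => -[_].
have : 0 <= Num.sqrt L / 4 by rewrite divr_ge0 ?sqrtr_ge0.
lra.
Qed.

End MainK.

Unset Implicit Arguments.

Theorem proposition4p1 (R : realType) (L b : R) (eta : pt R -> R) :
  1 <= L -> 0 <= b ->
  rsmooth eta ->
  (forall x y : pt R, x.2 = y.2 -> eta x = eta y) ->
  (forall l : seq 'I_2, exists M : R, forall x, `|riter l eta x| <= M) ->
  (forall x, 0 <= eta x <= 1) ->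
  closure [set x | eta x != 0] `<=` [set x | 0 <= x.2 /\ Num.sqrt L / 4 < x.2] ->
  forall psi phi : spinor R, Hb_graph b psi phi ->
  exists chi : spinor R,
    Hb_graph b (smul eta psi) chi /\ HbE_graph b (smul eta psi) chi.
Proof.
move=> _ _ se _ hbd h01 hsupp psi phi [L2psi [L2phi [u [cu [c1 c2]]]]].
have [K0 hK0] := hbd [:: ord0].
have [K1 hK1] := hbd [:: lift ord0 ord0].
have meta : measurable_fun setT eta := cont_meas ((se [::]).1).
have smpsi : smeas psi := L2psi.1.
have smphi : smeas phi := L2phi.1.
have smchi := smeas_chi se smphi smpsi.
have smep : smeas (smul eta psi) := smeas_smul meta smpsi.
have su n : ssmooth (u n) := (cu n).1.
have smu n : smeas (u n) := smeas_smooth [::] (su n).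
have smv n : smeas (smul eta (u n)) := smeas_smul meta (smu n).
have svn n : ssmooth (smul eta (u n)) := ssmooth_smul se (su n).
have smdu n : smeas (Defs.dirac b (u n)) := smeas_dirac b (su n).
have smdv n : smeas (Defs.dirac b (smul eta (u n))) := smeas_dirac b (svn n).
have e2 x : eta x ^+ 2 <= 1.
  by have /andP[a1 a2] := h01 x; rewrite expr_le1.
set Kc := 4 * (K0 ^+ 2 + K1 ^+ 2).
have Kc0 : 0 <= Kc by rewrite /Kc mulr_ge0 // addr_ge0 // sqr_ge0.
have bchi x : snorm2 (chiF eta phi psi x) <= 2 * snorm2 (phi x) + Kc * snorm2 (psi x).
  rewrite /chiF /Kc; exact: (shape_bound (phi x) (psi x) (e2 x) (hK0 x) (hK1 x)).
have bdiff n x : snorm2 (Defs.dirac b (smul eta (u n)) x - chiF eta phi psi x) <=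
    2 * snorm2 (Defs.dirac b (u n) x - phi x) + Kc * snorm2 (u n x - psi x).
  rewrite /chiF dirac_diff // /Kc.
  exact: (shape_bound _ _ (e2 x) (hK0 x) (hK1 x)).
have bvd n x : snorm2 (smul eta (u n) x - smul eta psi x) <=
    1 * snorm2 (u n x - psi x) + 0 * snorm2 (u n x - psi x).
  rewrite mul1r mul0r addr0 smul_diff.
  exact: (smul_bound (fun y => u n y - psi y) (h01 x)).
have bep x : snorm2 (smul eta psi x) <= 1 * snorm2 (psi x) + 0 * snorm2 (psi x).
  by rewrite mul1r mul0r addr0; exact: (smul_bound psi (h01 x)).
have cv := dist2_comb ler01 (lexx 0) smv smep smu smpsi smu smpsi bvd c1 c1.
have cd := dist2_comb (ler0n _ 2) Kc0 smdv smchi smdu smphi smu smpsi bdiff c2 c1.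
have L2ep := L2_comb ler01 (lexx 0) smep L2psi L2psi bep.
have L2chi := L2_comb (ler0n _ 2) Kc0 smchi L2phi L2psi bchi.
exists (chiF eta phi psi); split.
- split => //; split => //; exists (fun n => smul eta (u n)); split => //.
  move=> n; split; first exact: svn.
  have [M hM] := (cu n).2; exists M => x hx.
  by rewrite /smul hM // scaler0.
- split; first exact: L2on_E.
  split; first exact: L2on_E.
  exists (fun n => smul eta (u n)); split; last split.
  + move=> n; have [M hM] := (cu n).2.
    have supp : forall x, M < pnorm x -> smul eta (u n) x = 0.
      by move=> x hx; rewrite /smul hM // scaler0.
    split; first exact: (csupp_schwartz (svn n) supp).
    split; last exact: (csupp_exp (svn n) supp).
    by move=> x1; rewrite /smul (eta_bdry hsupp) scale0r !mxE.
  + exact: (cvg_E smv smep cv).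
  + exact: (cvg_E smdv smchi cd).
Qed.
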